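(* Let $(X_i, X_j)$ be jointly Gaussian with standard normal marginals and correlation $\rho_{ij}$. Let $k, g \ge 2$ be integers and let $S_{i0} < S_{i1} < \dots < S_{i(k-2)}$ and $S_{j0} < S_{j1} < \dots < S_{j(g-2)}$ be real cutoffs; set $S_{i(-1)} = S_{j(-1)} = -\infty$ and $S_{i(k-1)} = S_{j(g-1)} = +\infty$. Define discrete variables $V_i \in \{0,\dots,k-1\}$ and $V_j \in \{0,\dots,g-1\}$ by $V_i = c$ iff $S_{i(c-1)} < X_i \le S_{ic}$ and $V_j = d$ iff $S_{j(d-1)} < X_j \le S_{jd}$. Then $$\mathrm{Cov}(V_i, V_j) = \sum_{c_i=0}^{k-2}\sum_{c_j=0}^{g-2}\Big[\Psi(S_{ic_i}, S_{jc_j}, \rho_{ij}) - \Psi(S_{ic_i}, S_{jc_j}, 0)\Big],$$ where $\Psi(u,v,\rho)$ denotes the cumulative distribution function, evaluated at $(u,v)$, of the standard bivariate normal distribution with correlation $\rho$.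
   Context: $V_i$ and $V_j$ are obtained by ''linear discretization'' of the standard Gaussian variables $X_i$ and $X_j$, i.e., by partitioning the real line with increasing cutoffs and labeling the intervals $0,1,2,\dots$ from left to right. *)

(* Defs.v *)
From HB Require Import structures.
From mathcomp Require Import all_boot all_order all_algebra.
From mathcomp Require Import all_classical all_reals all_analysis.
Set Implicit Arguments. Unset Strict Implicit. Unset Printing Implicit Defensive.
Import Order.TTheory GRing.Theory Num.Theory.
Local Open Scope classical_set_scope.
Local Open Scope ring_scope.

Definition std_normal_pdf {R : realType} (x : R) : R := normal_pdf 0 1 x.

(* Law of the standard bivariate normal distribution with correlation rho
   (-1 <= rho <= 1): the law of (Z1, rho Z1 + sqrt(1-rho^2) Z2) for
   independent standard normals Z1, Z2.  Valid also for rho = +-1. *)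
Definition std_bvn_law {R : realType} (rho : R) (A : set (R * R)%type) : \bar R :=
  (\int[@lebesgue_measure R]_x \int[@lebesgue_measure R]_y
     ((std_normal_pdf x * std_normal_pdf y)%:E *
      (\1_A (x, rho * x + Num.sqrt (1 - rho ^+ 2) * y))%:E))%E.

Definition Psi {R : realType} (u v rho : R) : R :=
  fine (std_bvn_law rho (`]-oo, u] `*` `]-oo, v])).

Definition std_bvn_pair {d} {T : measurableType d} {R : realType}
  (P : probability T R) (X Y : T -> R) (rho : R) : Prop :=
  [/\ measurable_fun setT X, measurable_fun setT Y, -1 <= rho <= 1 &
      forall A : set (R * R)%type, measurable A ->
        P ((fun t => (X t, Y t)) @^-1` A) = std_bvn_law rho A].

Definition cut_lo {R : realType} (S : nat -> R) (c : nat) : \bar R :=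
  if c == 0%N then -oo%E else (S c.-1)%:E.
Definition cut_hi {R : realType} (n : nat) (S : nat -> R) (c : nat) : \bar R :=
  if c == n.-1 then +oo%E else (S c)%:E.

Definition lin_discretization {T : Type} {R : realType} (n : nat) (S : nat -> R)
  (X V : T -> R) : Prop :=
  forall t (c : nat), (c < n)%N ->
    (V t = c%:R <-> (cut_lo S c < (X t)%:E)%E /\ ((X t)%:E <= cut_hi n S c)%E).

Definition strictly_increasing_cutoffs {R : realType} (n : nat) (S : nat -> R) : Prop :=
  forall a b : nat, (a < b)%N -> (b <= n - 2)%N -> S a < S b.

(* Main.v *)
Require Import Defs.
From HB Require Import structures.
From mathcomp Require Import all_boot all_order all_algebra.
From mathcomp Require Import all_classical all_reals all_analysis.
From mathcomp Require Import ring lra.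
From mathcomp Require Import measurable_realfun.
From mathcomp Require Import zify.
Import Order.TTheory GRing.Theory Num.Theory.
Import numFieldNormedType.Exports.
Local Open Scope ring_scope.
Local Open Scope classical_set_scope.

Section GA.
Context {R : realType}.
Local Notation mu := (@lebesgue_measure R).
Local Notation phi := (@std_normal_pdf R).

Lemma phi_ge0 x : 0 <= phi x.
Proof. exact: normal_pdf_ge0. Qed.

Lemma measurable_phi : measurable_fun setT phi.
Proof. exact: measurable_normal_pdf. Qed.

Lemma int_phi : (\int[mu]_x (phi x)%:E = 1)%E.
Proof. exact: integral_normal_pdf. Qed.

Lemma int_indic_mul (D : set R) (f : R -> R) :
  (\int[mu]_x ((f x)%:E * (\1_D x)%:E) = \int[mu]_(x in D) (f x)%:E)%E.
Proof.
rewrite [RHS]integral_mkcond; apply: eq_integral => x _.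
rewrite /patch indicE; case: (x \in D) => /=; by rewrite ?mule1 ?mule0.
Qed.


Lemma mphiI (B : set R) : measurable B ->
  measurable_fun setT (fun y => ((phi y)%:E * (\1_B y)%:E)%E).
Proof.
move=> mB; rewrite (_ : (fun y => _) = EFin \o (fun y => phi y * \1_B y)); last first.
  by apply/funext => y /=; rewrite EFinM.
apply/measurable_EFinP; apply: measurable_funM; first exact: measurable_phi.
exact: measurable_indic.
Qed.

Lemma law_fst rho (A : set R) : measurable A ->
  std_bvn_law rho (A `*` setT) = (\int[mu]_(x in A) (phi x)%:E)%E.
Proof.
move=> mA; rewrite /std_bvn_law -int_indic_mul; apply: eq_integral => x _.
have E y : ((phi x * phi y)%:E * (\1_(A `*` setT) (x, rho * x + Num.sqrt (1 - rho ^+ 2) * y))%:E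
   = ((phi x * \1_A x)%:E * (phi y)%:E))%E.
  by rewrite !indicE in_setX in_setT andbT -!EFinM; congr EFin; ring.
under eq_integral => y _ do rewrite E.
rewrite ge0_integralZl//=; last 3 first.
- by apply/measurable_EFinP; exact: measurable_phi.
- by move=> y _; rewrite lee_fin phi_ge0.
- by rewrite lee_fin mulr_ge0// phi_ge0.
by rewrite int_phi mule1 EFinM.
Qed.

Lemma law0 (A B : set R) : measurable A -> measurable B ->
  std_bvn_law 0 (A `*` B) =
  (\int[mu]_(x in A) (phi x)%:E * \int[mu]_(x in B) (phi x)%:E)%E.
Proof.
move=> mA mB; rewrite /std_bvn_law.
have E x y : ((phi x * phi y)%:E * (\1_(A `*` B) (x, 0 * x + Num.sqrt (1 - 0 ^+ 2) * y))%:E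
   = ((phi x * \1_A x)%:E * ((phi y)%:E * (\1_B y)%:E)))%E.
  rewrite expr0n/= subr0 sqrtr1 mul0r add0r mul1r.
  by rewrite !indicE in_setX -!EFinM; congr EFin; case: (x \in A); case: (y \in B) => /=; ring.
under eq_integral => x _ do under eq_integral => y _ do rewrite E.
have I x : (\int[mu]_y ((phi x * \1_A x)%:E * ((phi y)%:E * (\1_B y)%:E)) =
    (phi x * \1_A x)%:E * \int[mu]_(y in B) (phi y)%:E)%E.
  rewrite ge0_integralZl//= ?int_indic_mul//.
  - exact: mphiI.
  - by move=> y _; rewrite -EFinM lee_fin mulr_ge0 ?phi_ge0.
  - by rewrite lee_fin mulr_ge0 ?phi_ge0.
under eq_integral => x _ do rewrite I.
rewrite ge0_integralZr//=.
- by under eq_integral => x _ do rewrite EFinM; rewrite int_indic_mul.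
- apply/measurable_EFinP; apply: measurable_funM; first exact: measurable_phi.
  exact: measurable_indic.
- by move=> y _; rewrite lee_fin mulr_ge0 ?phi_ge0.
- by apply: integral_ge0 => y _; rewrite lee_fin phi_ge0.
Qed.

Lemma phi_cont : continuous (normal_pdf (0:R) 1).
Proof. exact: continuous_normal_pdf (oner_neq0 R). Qed.

Section aff.
Variables (m s : R).
Hypothesis s0 : 0 < s.
Let F (t : R^o) : R^o := (t - m) / s.

Let F'E : F^`()%classic = cst s^-1.
Proof.
apply/funext => x; rewrite /F derive1E deriveM// deriveD// derive_cst scaler0.
by rewrite add0r derive_id derive_cst addr0 scaler1.
Qed.

Let dF x : derivable F x 1.
Proof. by rewrite /F; apply: derivableM => //; apply: derivableD. Qed.

Let incF : {homo F : x y / x < y}.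
Proof. by move=> x y xy; rewrite /F ltr_pM2r ?invr_gt0// ltrBlDr subrK. Qed.

Let FNy : F x @[x --> -oo] --> -oo.
Proof. by apply/gt0_cvgMlNy; [rewrite invr_gt0|exact: cvg_addrr_Ny]. Qed.

Let Fy : F x @[x --> +oo] --> +oo.
Proof. by apply/gt0_cvgMly; [rewrite invr_gt0|exact: cvg_addrr]. Qed.

Lemma int_aff : (\int[mu]_x (phi ((x - m) / s) / s)%:E = 1)%E.
Proof.
rewrite -int_phi (@increasing_ge0_integration_by_substitutionT _ F)//.
- by apply: eq_integral => x _; rewrite F'E.
- by rewrite F'E => ?; exact: cvg_cst.
- by rewrite F'E; exact: is_cvg_cst.
- by rewrite F'E; exact: is_cvg_cst.
- exact: phi_cont.
- exact: phi_ge0.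
Qed.

Lemma subst_aff (b : R) : (\int[mu]_(y in `]-oo, ((b - m) / s)%R]) (phi y)%:E =
  \int[mu]_(t in `]-oo, b]) (phi ((t - m) / s) / s)%:E)%E.
Proof.
rewrite (_ : (b - m) / s = F b)//.
rewrite (@increasing_ge0_integration_by_substitutionNy _ F)//.
- by apply: eq_integral => x _; rewrite F'E.
- by move=> x y _ _; exact: incF.
- by rewrite F'E => ? _; exact: cvg_cst.
- by rewrite F'E; exact: is_cvg_cst.
- by rewrite F'E; exact: cvg_cst.
- split; first by move=> x _; exact: dF.
  apply: cvg_at_left_filter.
  exact/differentiable_continuous/derivable1_diffP/dF.
- exact/continuous_subspaceT/phi_cont.
- by move=> x _; exact: phi_ge0.
Qed.

End aff.

Lemma phi_swap r s x t : s ^+ 2 = 1 - r ^+ 2 -> s != 0 ->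
  phi x * phi ((t - r * x) / s) = phi t * phi ((x - r * t) / s).
Proof.
move=> hs s0; rewrite /std_normal_pdf normal_pdfE ?oner_neq0//= /normal_fun.
rewrite mulrACA [in RHS]mulrACA -!expRD; congr (_ * expR _).
have h : (t - r * x) ^+ 2 = (x - r * t) ^+ 2 + (t ^+ 2 - x ^+ 2) * s ^+ 2.
  by rewrite hs; ring.
rewrite !subr0 !expr_div_n h; field; exact: s0.
Qed.

Lemma phi_even x : phi (- x) = phi x.
Proof. by rewrite /std_normal_pdf normal_pdfE ?oner_neq0//= /normal_fun !subr0 sqrrN. Qed.

Lemma law_snd rho (b : R) : -1 <= rho <= 1 ->
  std_bvn_law rho (setT `*` `]-oo, b]) = (\int[mu]_(x in `]-oo, b]) (phi x)%:E)%E.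
Proof.
move=> /andP[r1 r2]; rewrite /std_bvn_law.
set s := Num.sqrt (1 - rho ^+ 2).
have hs2 : s ^+ 2 = 1 - rho ^+ 2 by rewrite sqr_sqrtr//; nra.
set I := `]-oo, b].
have E x y : ((phi x * phi y)%:E * (\1_(setT `*` I) (x, rho * x + s * y))%:E =
   (phi x)%:E * ((phi y)%:E * (\1_I (rho * x + s * y))%:E))%E.
  by rewrite !indicE in_setX in_setT /= -!EFinM mulrA.
under eq_integral => x _ do under eq_integral => y _ do rewrite E.
have mI : measurable I by exact: measurable_itv.
have J x : (\int[mu]_y ((phi x)%:E * ((phi y)%:E * (\1_I (rho * x + s * y))%:E)) =
   (phi x)%:E * \int[mu]_y ((phi y)%:E * (\1_I (rho * x + s * y))%:E))%E.
  rewrite ge0_integralZl//=.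
  - rewrite (_ : (fun y => _) = EFin \o (fun y => phi y * \1_I (rho * x + s * y))); last first.
      by apply/funext => y /=; rewrite EFinM.
    apply/measurable_EFinP; apply: measurable_funM; first exact: measurable_phi.
    apply: measurableT_comp; first exact: measurable_indic.
    by apply: measurable_funD => //; apply: measurable_funM.
  - by move=> y _; rewrite -EFinM lee_fin mulr_ge0 ?phi_ge0.
  - by rewrite lee_fin phi_ge0.
under eq_integral => x _ do rewrite J.
have [s0|s0] := eqVneq s 0.
  have K x : (\int[mu]_y ((phi y)%:E * (\1_I (rho * x + s * y))%:E) = (\1_I (rho * x))%:E)%E.
    under eq_integral => y _ do rewrite s0 mul0r addr0.
    rewrite ge0_integralZr//=.
    all: try first [by rewrite integral_normal_pdf mul1e | by move=> ? _; rewrite lee_fin phi_ge0 | by rewrite lee_fin | by apply/measurable_EFinP; exact: measurable_phi].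
  under eq_integral => x _ do rewrite K.
  have : (rho - 1) * (rho + 1) = 0 by move: hs2; rewrite s0 expr0n/=; nra.
  move/eqP; rewrite mulf_eq0 => /orP[|] /eqP hr.
    have -> : rho = 1 by lra.
    by under eq_integral => x _ do rewrite mul1r; rewrite int_indic_mul.
  have -> : rho = -1 by lra.
  rewrite /I -[b in RHS]opprK ge0_integration_by_substitutionNy; first last.
  - by move=> x _; exact: phi_ge0.
  - exact/continuous_subspaceT/phi_cont.
  rewrite -int_indic_mul; apply: eq_integral => x _ /=.
  by rewrite phi_even !indicE mulN1r !mem_setE !in_itv/= andbT lerNl.
have sp : 0 < s by rewrite lt_neqAle eq_sym s0 sqrtr_ge0.
have K x : (\int[mu]_y ((phi y)%:E * (\1_I (rho * x + s * y))%:E) =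
    \int[mu]_(t in I) (phi ((t - rho * x) / s) / s)%:E)%E.
  rewrite -subst_aff// -int_indic_mul; apply: eq_integral => y _.
  rewrite !indicE !mem_setE !in_itv/= ler_pdivlMr//; congr (_ * (_%:R)%:E)%E; by rewrite lerBrDl (mulrC y s).
under eq_integral => x _ do rewrite K.
pose f (z : R * R) := (phi z.1 * (phi ((z.2 - rho * z.1) / s) / s) * \1_I z.2)%:E.
have K2 x : ((phi x)%:E * \int[mu]_(t in I) (phi ((t - rho * x) / s) / s)%:E =
    \int[mu]_t f (x, t))%E.
  rewrite -int_indic_mul -ge0_integralZl//=.
  - by apply: eq_integral => t _; rewrite /f/= -!EFinM mulrA.
  - rewrite (_ : (fun y => _) = EFin \o (fun t => phi ((t - rho * x) / s) / s * \1_I t)); last first.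
      by apply/funext => y /=; rewrite EFinM.
    apply/measurable_EFinP; apply: measurable_funM; last exact: measurable_indic.
    apply: measurable_funM => //; apply: measurableT_comp; first exact: measurable_phi.
    by apply: measurable_funM => //; apply: measurable_funB.
  - by move=> t _; rewrite -EFinM lee_fin mulr_ge0 ?indic_ge0// divr_ge0 ?phi_ge0// ltW.
  - by rewrite lee_fin phi_ge0.
under eq_integral => x _ do rewrite K2.
have mf : measurable_fun setT f.
  apply/measurable_EFinP; apply: measurable_funM; last first.
    by apply: measurableT_comp; [exact: measurable_indic|exact: measurable_snd].
  apply: measurable_funM.
    by apply: measurableT_comp; [exact: measurable_phi|exact: measurable_fst].
  apply: measurable_funM => //; apply: measurableT_comp; first exact: measurable_phi.
  apply: measurable_funM => //; apply: measurable_funB; first exact: measurable_snd.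
  by apply: measurable_funM => //; exact: measurable_fst.
have f0 z : (0 <= f z)%E by rewrite lee_fin !mulr_ge0 ?indic_ge0 ?phi_ge0// invr_ge0 ltW.
rewrite (@fubini_tonelli _ _ _ _ _ mu mu f mf f0) /=.
rewrite -int_indic_mul; apply: eq_integral => t _.
have L x : f (x, t) = ((phi t * \1_I t)%:E * (phi ((x - rho * t) / s) / s)%:E)%E.
  rewrite /f/= -EFinM; congr EFin.
  rewrite mulrA (phi_swap rho s x t hs2 s0); ring.
under eq_integral => x _ do rewrite L.
rewrite ge0_integralZl//= ?int_aff ?mule1 ?EFinM//.
- apply/measurable_EFinP; apply: measurable_funM => //; apply: measurableT_comp; first exact: measurable_phi.
  by apply: measurable_funM => //; apply: measurable_funB.
- by move=> x _; rewrite lee_fin divr_ge0 ?phi_ge0// ltW.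
- by rewrite lee_fin mulr_ge0 ?indic_ge0 ?phi_ge0.
Qed.

End GA.


Lemma count_prefix (p : nat -> bool) N :
  (forall a b, (a <= b)%N -> (b < N)%N -> p b -> p a) ->
  forall c, (c < N)%N -> p c = (c < \sum_(i < N) p i)%N.
Proof.
elim: N => [//|N IH] cl c cN.
rewrite big_ord_recr /=.
have cl' : forall a b, (a <= b)%N -> (b < N)%N -> p b -> p a.
  by move=> a b ab bN; apply: cl => //; lia.
case pN: (p N).
  have allp : forall i, (i <= N)%N -> p i by move=> i iN; apply: (cl i N).
  rewrite (eq_bigr (fun=> 1%N)); last by move=> i _; rewrite allp// ltnW.
  by rewrite sum_nat_const card_ord muln1 allp; lia.
have hs : (\sum_(i < N) p i <= N)%N.
  by rewrite -[X in (_ <= X)%N](card_ord N) -sum1_card leq_sum// => i _; case: (p i).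
rewrite addn0; have [cN'|cN'] := ltnP c N; first exact: IH.
have -> : c = N by lia.
by rewrite pN; apply/esym/negbTE; rewrite -leqNgt.
Qed.

Lemma memC_preim (R : realType) T (X : T -> R) (t : T) (a : R) :
  (t \in ~` (X @^-1` `]-oo, a])) = (a < X t).
Proof.
apply/idP/idP.
- by move/set_mem; rewrite /preimage/= in_itv/= => /negP; rewrite -ltNge.
- move=> h; apply: mem_set; rewrite /preimage/= in_itv/=; apply/negP; rewrite -ltNge//.
Qed.

Lemma disc_sum {T : Type} {R : realType} n (S : nat -> R) (X V : T -> R) :
  (2 <= n)%N -> strictly_increasing_cutoffs n S -> lin_discretization n S X V ->
  V = \sum_(c < n.-1) \1_(~` (X @^-1` `]-oo, S c])).
Proof.
move=> n2 inc H; apply/funext => t; rewrite fct_sumE.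
rewrite (eq_bigr (fun c : 'I_n.-1 => ((S c < X t)%R : nat)%:R)); last first.
  by move=> c _; rewrite indicE memC_preim.
rewrite -natr_sum.
set p := fun c => (S c < X t)%R.
have cl : forall a b, (a <= b)%N -> (b < n.-1)%N -> p b -> p a.
  move=> a b ab bn; rewrite /p => h.
  have [->//|ab'] := eqVneq a b.
  have : (a < b)%N by rewrite ltn_neqAle ab' ab.
  move=> lab; apply: lt_trans h; apply: inc => //; lia.
have cp := @count_prefix p _ cl.
set m := (\sum_(i < n.-1) p i)%N.
have hm : (m <= n.-1)%N.
  by rewrite -[X in (_ <= X)%N](card_ord n.-1) -sum1_card leq_sum// => i _; case: (p i).
apply/(H t m _).2; first lia.
split.
  rewrite /cut_lo; case: eqP => [_|m0]; first exact: ltNyr.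
  rewrite lte_fin.
  have : p m.-1 by rewrite cp; lia.
  by [].
rewrite /cut_hi; case: eqP => [_|m1]; first exact: leey.
rewrite lee_fin.
have : ~~ p m by rewrite cp; lia.
by rewrite /p -leNgt.
Qed.

Section prob.
Context d (T : measurableType d) (R : realType) (P : probability T R).

Lemma fPK (A : set T) : measurable A -> P A = (fine (P A))%:E.
Proof. by move=> mA; rewrite fineK// fin_num_measure. Qed.

Lemma Lfun_indic (A : set T) : measurable A -> (\1_A : T -> R) \in Lfun P 1.
Proof. by move=> mA; apply/Lfun1_integrable; exact: integrable_indic. Qed.

Lemma E_sum n (F : 'I_n -> T -> R) : (forall i, F i \in Lfun P 1) ->
  ('E_P[\sum_(i < n) F i] = \sum_(i < n) 'E_P[F i])%E.
Proof.
move=> h; rewrite -(big_map F predT id) expectation_sum.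
  by rewrite big_map.
by move=> f /mapP[i _ ->].
Qed.

Lemma cov_indic_sums n1 n2 (A B : nat -> set T) :
  (forall i, measurable (A i)) -> (forall j, measurable (B j)) ->
  covariance P (\sum_(i < n1) \1_(A i)) (\sum_(j < n2) \1_(B j)) =
  (\sum_(i < n1) \sum_(j < n2)
     (fine (P (A i `&` B j)) - fine (P (A i)) * fine (P (B j))))%:E.
Proof.
move=> mA mB.
have pE : (\sum_(i < n1) \1_(A i)) * (\sum_(j < n2) \1_(B j)) =
    \sum_(i < n1) \sum_(j < n2) (\1_(A i `&` B j) : T -> R).
  apply/funext => t; rewrite mulrfctE !fct_sumE /= big_distrlr /=.
  apply: eq_bigr => i _; rewrite fct_sumE; apply: eq_bigr => j _.
  by rewrite indicI.
have LA : \sum_(i < n1) (\1_(A i) : T -> R) \in Lfun P 1.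
  by apply: rpred_sum => i _; exact: Lfun_indic.
have LB : \sum_(j < n2) (\1_(B j) : T -> R) \in Lfun P 1.
  by apply: rpred_sum => i _; exact: Lfun_indic.
rewrite covarianceE//; last first.
  rewrite pE; apply: rpred_sum => i _; apply: rpred_sum => j _.
  by apply: Lfun_indic; exact: measurableI.
rewrite pE E_sum; last first.
  by move=> i; apply: rpred_sum => j _; apply: Lfun_indic; exact: measurableI.
rewrite !E_sum; try by move=> i; exact: Lfun_indic.
have e1 : (\sum_(i < n1) 'E_P[\sum_(j < n2) \1_(A i `&` B j)] =
    (\sum_(i < n1) \sum_(j < n2) fine (P (A i `&` B j)))%:E)%E.
  rewrite -sumEFin; apply: eq_bigr => i _.
  rewrite E_sum; last by move=> j; apply: Lfun_indic; exact: measurableI.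
  rewrite -sumEFin; apply: eq_bigr => j _.
  by rewrite expectation_indic -?fPK//; exact: measurableI.
have e2 : (\sum_(i < n1) 'E_P[\1_(A i)] = (\sum_(i < n1) fine (P (A i)))%:E)%E.
  by rewrite -sumEFin; apply: eq_bigr => i _; rewrite expectation_indic -?fPK.
have e3 : (\sum_(j < n2) 'E_P[\1_(B j)] = (\sum_(j < n2) fine (P (B j)))%:E)%E.
  by rewrite -sumEFin; apply: eq_bigr => i _; rewrite expectation_indic -?fPK.
rewrite e1 e2 e3 -EFinM -EFinB; congr EFin.
rewrite mulr_suml -sumrB; apply: eq_bigr => i _.
by rewrite mulr_sumr -sumrB.
Qed.

End prob.

Section main.
Context d (T : measurableType d) (R : realType) (P : probability T R).
Variables (Xi Xj : T -> R) (rho : R).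
Hypothesis H : std_bvn_pair P Xi Xj rho.

Lemma term (a b : R) :
  fine (P (~` (Xi @^-1` `]-oo, a]) `&` ~` (Xj @^-1` `]-oo, b]))) -
  fine (P (~` (Xi @^-1` `]-oo, a]))) * fine (P (~` (Xj @^-1` `]-oo, b]))) =
  Psi a b rho - Psi a b 0.
Proof.
case: H => mXi mXj /andP[r1 r2] HL.
set A := Xi @^-1` `]-oo, a]; set B := Xj @^-1` `]-oo, b].
have mA : measurable A.
  by have := mXi measurableT _ (measurable_itv `]-oo, a]%R); rewrite setTI.
have mB : measurable B.
  by have := mXj measurableT _ (measurable_itv `]-oo, b]%R); rewrite setTI.
have hPsi : Psi a b rho = fine (P (A `&` B)).
  rewrite /Psi -HL//; exact: measurableX.
have hA : P A = (\int[lebesgue_measure]_(x in `]-oo, a]) (std_normal_pdf x)%:E)%E.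
  rewrite -(@law_fst _ rho)// -HL; last exact: measurableX.
  by congr (P _); apply/seteqP; split => t /=; rewrite /A /preimage /=; tauto.
have hB : P B = (\int[lebesgue_measure]_(x in `]-oo, b]) (std_normal_pdf x)%:E)%E.
  rewrite -(@law_snd _ rho)// ?r1// -HL; last exact: measurableX.
  by congr (P _); apply/seteqP; split => t /=; rewrite /B /preimage /=; tauto.
have hPsi0 : Psi a b 0 = fine (P A) * fine (P B).
  by rewrite /Psi law0// -hA -hB fineM// fin_num_measure.
have mAB : measurable (A `&` B) by exact: measurableI.
have hC1 : fine (P (~` A)) = 1 - fine (P A).
  by rewrite probability_setC// (@fPK _ _ _ P _ mA).
have hC2 : fine (P (~` B)) = 1 - fine (P B).
  by rewrite probability_setC// (@fPK _ _ _ P _ mB).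
have hC12 : fine (P (~` A `&` ~` B)) = 1 - (fine (P A) + fine (P B) - fine (P (A `&` B))).
  rewrite -setCU probability_setC; last exact: measurableU.
  have hAf : (P A < +oo)%E by rewrite (@fPK _ _ _ P _ mA) ltry.
  rewrite measureUfinl//.
  rewrite fineB ?fin_numB ?fin_numD ?fin_num_measure// fineB ?fin_numD ?fin_num_measure// fineD ?fin_num_measure//.
rewrite hC1 hC2 hC12 hPsi hPsi0; ring.
Qed.

End main.

Theorem main_aux (d : measure_display) (T : measurableType d) (R : realType)
  (P : probability T R) (Xi Xj : T -> R) (rho : R)
  (k g : nat) (Si Sj : nat -> R) (Vi Vj : T -> R) :
  std_bvn_pair P Xi Xj rho ->
  (2 <= k)%N -> (2 <= g)%N ->
  strictly_increasing_cutoffs k Si -> strictly_increasing_cutoffs g Sj ->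
  lin_discretization k Si Xi Vi -> lin_discretization g Sj Xj Vj ->
  covariance P Vi Vj =
  (\sum_(ci < k.-1) \sum_(cj < g.-1)
     (Psi (Si ci) (Sj cj) rho - Psi (Si ci) (Sj cj) 0))%:E.
Proof.
move=> H k2 g2 incI incJ dI dJ.
rewrite (@disc_sum _ _ _ _ _ _ k2 incI dI) (@disc_sum _ _ _ _ _ _ g2 incJ dJ).
have [mXi mXj _ _] := H.
have mA : forall c, measurable (~` (Xi @^-1` `]-oo, Si c])).
  move=> c; apply: measurableC.
  by have := mXi measurableT _ (measurable_itv `]-oo, Si c]%R); rewrite setTI.
have mB : forall c, measurable (~` (Xj @^-1` `]-oo, Sj c])).
  move=> c; apply: measurableC.
  by have := mXj measurableT _ (measurable_itv `]-oo, Sj c]%R); rewrite setTI.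
rewrite (@cov_indic_sums _ _ _ P _ _ (fun c => ~` (Xi @^-1` `]-oo, Si c]))
  (fun c => ~` (Xj @^-1` `]-oo, Sj c])) mA mB).
congr EFin; apply: eq_bigr => i _; apply: eq_bigr => j _.
exact: term.
Qed.

Local Close Scope classical_set_scope.

Theorem mainTheorem3 (d : measure_display) (T : measurableType d) (R : realType)
  (P : probability T R) (Xi Xj : T -> R) (rho : R)
  (k g : nat) (Si Sj : nat -> R) (Vi Vj : T -> R) :
  std_bvn_pair P Xi Xj rho ->
  (2 <= k)%N -> (2 <= g)%N ->
  strictly_increasing_cutoffs k Si -> strictly_increasing_cutoffs g Sj ->
  lin_discretization k Si Xi Vi -> lin_discretization g Sj Xj Vj ->
  covariance P Vi Vj =
  (\sum_(ci < k.-1) \sum_(cj < g.-1)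
     (Psi (Si ci) (Sj cj) rho - Psi (Si ci) (Sj cj) 0))%:E.
Proof. exact: main_aux. Qed.
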